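(* Let $(X_i)_{i\in\mathbb N}$ be a countable family of independent $\{0,1\}$-valued random variables and let $X=\sum_i X_i$ with $\mathbb E(X)<\infty$. Then for all integers $k\ge 2$, $$\mathbb E(X^k)\le \mathbb E(X^{k-1})\cdot\big(k-1+\mathbb E(X)\big).$$ *)

(* Defs.v *)
From HB Require Import structures.
From mathcomp Require Import all_boot all_order all_algebra.
From mathcomp Require Import all_classical all_reals all_analysis.
Set Implicit Arguments. Unset Strict Implicit. Unset Printing Implicit Defensive.
Import Order.TTheory GRing.Theory Num.Theory.
Local Open Scope classical_set_scope.
Local Open Scope ring_scope.
Local Open Scope ereal_scope.

Definition mutually_independent d (T : measurableType d) (R : realType)
  (P : probability T R) (X : nat -> {RV P >-> R}) : Prop :=
  forall (s : seq nat) (B : nat -> set R),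
    uniq s -> (forall i, i \in s -> measurable (B i)) ->
    P (\bigcap_(i in [set` s]) (X i @^-1` B i)) =
    \prod_(i <- s) P (X i @^-1` B i).

Definition sum_rv d (T : measurableType d) (R : realType)
  (P : probability T R) (X : nat -> {RV P >-> R}) : T -> \bar R :=
  fun x => \sum_(0 <= i <oo) (X i x)%:E.

(* Main.v *)
Set Warnings "-all".
Require Import Defs.
From HB Require Import structures.
From mathcomp Require Import all_boot all_order all_algebra.
From mathcomp Require Import all_classical all_reals all_analysis.
From mathcomp Require Import measurable_realfun.
Import Order.TTheory GRing.Theory Num.Theory.
Local Open Scope classical_set_scope.
Local Open Scope ring_scope.
Local Open Scope ereal_scope.
Section Finite.
Context {d : measure_display} {T : measurableType d} {R : realType}
  {P : probability T R} (X : nat -> {RV P >-> R})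
  (Hind : mutually_independent X)
  (H01 : forall i x, X i x = 0%R \/ X i x = 1%R) (n : nat).

Definition ev (A : {set 'I_n}) : set T :=
  [set x | forall i : 'I_n, i \in A -> X i x = 1%R].

Lemma ind_prod (I : finType) (h : I -> 'I_n) x :
  (\prod_(t : I) X (h t) x)%R = \1_(ev [set h t | t : I]) x.
Proof.
rewrite indicE; case: (pselect (ev [set h t | t : I] x)) => Hx.
  rewrite mem_set //= big1 // => t _; apply: Hx; exact: imset_f.
rewrite memNset //.
have [i iA Xi] : exists2 i, i \in [set h t | t : I] & X i x <> 1%R.
  apply: contrapT => H; apply: Hx => i iA; apply: contrapT => Xi.
  by apply: H; exists i.
move: iA => /imsetP[t _ ->] in Xi *.
rewrite (bigD1 t) //=.
by case: (H01 (h t) x) Xi => -> // _; rewrite mul0r.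
Qed.

Lemma ind_mul (A : {set 'I_n}) (j : 'I_n) x :
  (\1_(ev A) x * X j x)%R = \1_(ev (j |: A)) x.
Proof.
rewrite !indicE.
case: (H01 j x) => Hj.
  rewrite Hj mulr0 memNset // => H.
  by have := H j (setU11 _ _); rewrite Hj => /eqP; rewrite eq_sym oner_eq0.
rewrite Hj mulr1.
case: (pselect (ev A x)) => HA.
  rewrite !mem_set // => i /setU1P[-> //|]; exact: HA.
rewrite !memNset // => H; apply: HA => i iA; apply: H; rewrite setU1r //.
Qed.


Definition q (i : nat) : R := fine (P (X i @^-1` [set 1%R])).

Lemma Pq i : P (X i @^-1` [set 1%R]) = (q i)%:E.
Proof. by rewrite fineK // fin_num_measure // measurable_funPTI. Qed.

Lemma q_ge0 i : (0 <= q i)%R.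
Proof. by rewrite /q fine_ge0 // measure_ge0. Qed.

Lemma ev_cap A : ev A = \bigcap_(i in [set` map val (enum A)]) (X i @^-1` [set 1%R]).
Proof.
apply/seteqP; split => x /=.
  move=> H i /= /mapP[j jA ->]; apply: H; by rewrite -mem_enum.
move=> H i iA; apply: (H (val i)) => /=; apply/mapP; exists i => //.
by rewrite mem_enum.
Qed.

Lemma ev_meas A : measurable (ev A).
Proof.
rewrite ev_cap; apply: bigcap_measurableType => i _.
exact: measurable_funPTI.
Qed.

Lemma Eind A : \int[P]_x (\1_(ev A) x)%:E = (\prod_(i in A) q i)%:E.
Proof.
rewrite integral_indic //; last exact: ev_meas.
rewrite setIT ev_cap.
apply: eq_trans (Hind _ (fun=> [set 1%R]) _ _) _ => //.
- rewrite map_inj_uniq ?enum_uniq //; exact: val_inj.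
- rewrite big_map big_enum -prodEFin; apply: eq_bigr => i _; exact: Pq.
Qed.


Definition S x := (\sum_(i < n) X i x)%R.
Definition pi (A : {set 'I_n}) := (\prod_(i in A) q i)%R.

Lemma Spow m x : (S x ^+ m = \sum_(g : {ffun 'I_m -> 'I_n}) \1_(ev [set g t | t : 'I_m]) x)%R.
Proof.
rewrite -[m in LHS]card_ord -prodr_const /S bigA_distr_bigA.
by apply: eq_bigr => g _; rewrite ind_prod.
Qed.

Lemma SpowS m x : (S x ^+ m.+1 = \sum_(p : {ffun 'I_m -> 'I_n} * 'I_n)
   \1_(ev (p.2 |: [set p.1 t | t : 'I_m])) x)%R.
Proof.
rewrite exprSr Spow -(pair_bigA _ (fun (g : {ffun 'I_m -> 'I_n}) (j : 'I_n) => \1_(ev (j |: [set g t | t : 'I_m])) x)) /=.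
rewrite mulr_suml; apply: eq_bigr => g _.
rewrite /S mulr_sumr; apply: eq_bigr => j _; exact: ind_mul.
Qed.

Lemma S1 x : S x = (\sum_(j < n) \1_(ev [set j]) x)%R.
Proof.
apply: eq_bigr => j _; rewrite -(finset.setU0 [set j]%SET) -ind_mul indicE mem_set ?mul1r //.
by move=> i; rewrite finset.in_set0.
Qed.

Lemma Esum (I : finType) (A : I -> {set 'I_n}) :
  \int[P]_x (\sum_(g : I) \1_(ev (A g)) x)%:E = (\sum_g pi (A g))%:E.
Proof.
rewrite (eq_integral (fun x => \sum_(g : I) (\1_(ev (A g)) x)%:E)); last first.
  by move=> x _; rewrite sumEFin.
rewrite ge0_integral_sum //.
- rewrite -sumEFin; apply: eq_bigr => g _; exact: Eind.
- move=> g; apply/measurable_realfun.measurable_EFinP; apply: measurable_realfun.measurable_indic; exact: ev_meas.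
Qed.

Lemma pi_ge0 A : (0 <= pi A)%R.
Proof. by apply: prodr_ge0 => i _; exact: q_ge0. Qed.

Lemma ineq m :
  (\sum_(p : {ffun 'I_m -> 'I_n} * 'I_n) pi (p.2 |: [set p.1 t | t : 'I_m]) <=
   (\sum_(g : {ffun 'I_m -> 'I_n}) pi [set g t | t : 'I_m]) *
     (m%:R + \sum_(j < n) pi [set j]))%R.
Proof.
rewrite -(pair_bigA _ (fun (g : {ffun 'I_m -> 'I_n}) (j : 'I_n) => pi (j |: [set g t | t : 'I_m]))) /=.
rewrite mulr_suml; apply: ler_sum => g _.
set A := [set g t | t : 'I_m].
have cA : (#|A| <= m)%N by rewrite -[m in (_ <= m)%N]card_ord leq_imset_card.
rewrite (bigID (fun j => j \in A)) /=.
rewrite [X in (X + _ <= _)%R](eq_bigr (fun=> pi A)); last first.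
  by move=> j jA; congr pi; apply/finset.setUidPr; rewrite finset.sub1set.
rewrite [X in (_ + X <= _)%R](eq_bigr (fun j : 'I_n => q j * pi A)%R); last first.
  by move=> j jA; rewrite /pi finset.big_setU1.
rewrite sumr_const -mulr_suml mulrDr.
apply: lerD.
  by rewrite -[(pi A *+ _)%R]mulr_natr ler_wpM2l ?pi_ge0 // ler_nat.
rewrite mulrC ler_wpM2l ?pi_ge0 //.
rewrite (eq_bigr (fun j : 'I_n => q j)); last first.
  by move=> j _; rewrite /pi finset.big_set1.
rewrite [X in (_ <= X)%R](bigID (fun j => j \in A)) /= lerDr.
apply: sumr_ge0 => j _; exact: q_ge0.
Qed.

End Finite.

Section Finite2.
Context {d : measure_display} {T : measurableType d} {R : realType}
  {P : probability T R} (X : nat -> {RV P >-> R})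
  (Hind : mutually_independent X)
  (H01 : forall i x, X i x = 0%R \/ X i x = 1%R).

Lemma fin_ineq n m :
  \int[P]_x ((S X n x)%:E ^+ m.+1) <=
  \int[P]_x ((S X n x)%:E ^+ m) * (m%:R%:E + \int[P]_x (S X n x)%:E).
Proof.
rewrite (eq_integral (fun x => (\sum_(p : {ffun 'I_m -> 'I_n} * 'I_n)
   \1_(ev X n (p.2 |: [set p.1 t | t : 'I_m])) x)%:E)); last first.
  by move=> x _; rewrite -EFin_expe SpowS.
rewrite [X in _ <= X * _](eq_integral (fun x => (\sum_(g : {ffun 'I_m -> 'I_n})
   \1_(ev X n [set g t | t : 'I_m]) x)%:E)); last first.
  by move=> x _; rewrite -EFin_expe Spow.
rewrite [X in _ <= _ * (_ + X)](eq_integral (fun x => (\sum_(j < n)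
   \1_(ev X n [set j]) x)%:E)); last first.
  by move=> x _; rewrite (@S1 _ _ _ _ X H01 n).
rewrite !(@Esum _ _ _ _ X Hind n) -EFinD -EFinM lee_fin.
exact: (ineq X).
Qed.


Lemma X_ge0 i x : (0 <= X i x)%R.
Proof. by case: (H01 i x) => ->. Qed.

Lemma S_ge0 n x : (0 <= S X n x)%R.
Proof. by apply: sumr_ge0 => i _; exact: X_ge0. Qed.

Lemma S_cvg x : (S X N x)%:E @[N --> \oo] --> sum_rv X x.
Proof.
rewrite (_ : (fun N => (S X N x)%:E) = fun N => \sum_(0 <= i < N) (X i x)%:E).
  by apply: is_cvg_nneseries => i _ _; rewrite lee_fin X_ge0.
by apply: funext => N; rewrite /S sumEFin big_mkord.
Qed.

Lemma sum_rv_ge0 x : 0 <= sum_rv X x.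
Proof. by apply: nneseries_ge0 => i _ _; rewrite lee_fin X_ge0. Qed.

Lemma mule_def_pow (l : \bar R) j : 0 <= l -> l *? l ^+ j.
Proof.
case: l => [r| |] // _.
  by apply: mule_def_fin => //; apply: fin_numX.
by apply: mule_def_infty_neq0 => //; rewrite expe_eq0 andbF.
Qed.

Lemma cvg_pow (u : nat -> \bar R) l j : u N @[N --> \oo] --> l -> 0 <= l ->
  u N ^+ j @[N --> \oo] --> l ^+ j.
Proof.
move=> ul l0; elim: j => [|j IH].
  under eq_fun do rewrite expe0.
  by rewrite expe0; exact: cvg_cst.
under eq_fun do rewrite expeS.
rewrite expeS; apply: cvgeM => //; exact: mule_def_pow.
Qed.

Definition powS n j : T -> \bar R := fun x => (S X n x)%:E ^+ j.

Lemma meas_pow n j : measurable_fun [set: T] (powS n j).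
Proof.
rewrite (_ : powS n j = EFin \o (fun x => S X n x ^+ j)%R); last first.
  by apply: funext => x /=; rewrite EFin_expe.
apply/measurable_realfun.measurable_EFinP; apply: measurable_realfun.measurable_funX.
by apply: measurable_sum => i; exact: measurable_funPT.
Qed.

Lemma mono_pow x j : {homo (fun N => (S X N x)%:E ^+ j) : a b / (a <= b)%N >-> a <= b}.
Proof.
move=> a b ab; rewrite -!EFin_expe lee_fin; apply: lerXn2r; rewrite ?nnegrE ?S_ge0 //.
have h := @nondecreasing_series _ (fun i => X i x) xpredT 0 (fun i _ _ => X_ge0 i x) _ _ ab.
by rewrite !big_mkord in h.
Qed.

Lemma mct j : \int[P]_x ((S X N x)%:E ^+ j) @[N --> \oo] --> \int[P]_x (sum_rv X x ^+ j).
Proof.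
have := @cvg_monotone_convergence _ _ _ P setT measurableT
  (fun N => powS N j) (fun N => meas_pow N j) _ _.
rewrite (eq_integral (fun x => sum_rv X x ^+ j)); last first.
  move=> x _; apply: (cvg_lim (@ereal_hausdorff R)).
  apply: cvg_pow; [exact: S_cvg | exact: sum_rv_ge0].
apply.
- by move=> N x _; rewrite expe_ge0 // lee_fin S_ge0.
- by move=> x _; exact: mono_pow.
Qed.

Lemma Ile j N : \int[P]_x ((S X N x)%:E ^+ j) <= \int[P]_x (sum_rv X x ^+ j).
Proof.
rewrite -(cvg_lim (@ereal_hausdorff R) (mct j)).
apply: lime_ge; first exact: cvgP (mct j).
exists N => // M /= NM.
apply: ge0_le_integral => //; try exact: meas_pow.
- by move=> x _; rewrite expe_ge0 // lee_fin S_ge0.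
- by move=> x _; exact: mono_pow.
Qed.

End Finite2.

Theorem lemma3p2 (d : measure_display) (T : measurableType d) (R : realType)
  (P : probability T R) (X : nat -> {RV P >-> R})
  (Hind : mutually_independent X)
  (H01 : forall i x, X i x = 0%R \/ X i x = 1%R)
  (Hfin : \int[P]_x sum_rv X x < +oo)
  (k : nat) (hk : (2 <= k)%N) :
  \int[P]_x (sum_rv X x ^+ k) <=
  \int[P]_x (sum_rv X x ^+ k.-1) * ((k.-1)%:R%:E + \int[P]_x sum_rv X x).
Proof.
case: k hk => [|m] // hm /=.
rewrite -(cvg_lim (@ereal_hausdorff R) (mct X H01 m.+1)).
apply: lime_le; first exact: cvgP (mct X H01 m.+1).
apply: nearW => N.
apply: le_trans (fin_ineq X Hind H01 N m) _.
have e1 : forall f : T -> \bar R, \int[P]_x (f x ^+ 1) = \int[P]_x f x.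
  by move=> f; apply: eq_integral => x _; rewrite expeS expe0 mule1.
apply: lee_pmul.
- by apply: integral_ge0 => x _; rewrite expe_ge0 // lee_fin (S_ge0 X H01).
- by rewrite adde_ge0 // ?lee_fin // integral_ge0 // => x _; rewrite lee_fin (S_ge0 X H01).
- exact: (Ile X H01).
- rewrite leeD2l // -e1 -[X in _ <= X]e1; exact: (Ile X H01).
Qed.
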